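(* There is a constant $c>0$ such that for every integer $m\ge 1$ there exist two NFAs, each with $m+1$ states, over an alphabet of cardinality $2m$, such that there is a tower of height at least $c\cdot 2^{2m}$ between their languages and there is no infinite tower between their languages.
   Context: For strings $v=a_1\cdots a_k$ and $w$, $v\preccurlyeq w$ if $w\in\Sigma^*a_1\Sigma^*a_2\Sigma^*\cdots\Sigma^*a_k\Sigma^*$. A sequence $(w_i)_{i=1}^r$ of strings is a tower between languages $K$ and $L$ if $w_1\in K\cup L$ and for all $i=1,\dots,r-1$: $w_i\preccurlyeq w_{i+1}$, $w_i\in K$ implies $w_{i+1}\in L$, and $w_i\in L$ implies $w_{i+1}\in K$; $r$ is its height. An infinite tower is an infinite sequence with the same properties. *)

(* Defs.v *)
From mathcomp Require Import all_boot.
From Stdlib Require Import Reals.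

Set Implicit Arguments.
Unset Strict Implicit.
Unset Printing Implicit Defensive.

Record nfa (n k : nat) := NFA {
  nfa_init  : {set 'I_n};
  nfa_final : {set 'I_n};
  nfa_trans : 'I_n -> 'I_k -> {set 'I_n}
}.

Definition nfa_step n k (A : nfa n k) (S : {set 'I_n}) (a : 'I_k) : {set 'I_n} :=
  \bigcup_(q in S) nfa_trans A q a.

Definition nfa_reach n k (A : nfa n k) (S : {set 'I_n}) (w : seq 'I_k) : {set 'I_n} :=
  foldl (nfa_step A) S w.

Definition nfa_lang n k (A : nfa n k) : pred (seq 'I_k) :=
  fun w => nfa_reach A (nfa_init A) w :&: nfa_final A != set0.

Definition subword (T : eqType) (v w : seq T) : bool := subseq v w.

Definition is_tower (T : eqType) (K L : pred (seq T)) (ws : seq (seq T)) : Prop :=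
  0 < size ws /\
  (K (nth [::] ws 0) || L (nth [::] ws 0)) /\
  (forall i, i.+1 < size ws ->
     [/\ subword (nth [::] ws i) (nth [::] ws i.+1),
         K (nth [::] ws i) -> L (nth [::] ws i.+1) &
         L (nth [::] ws i) -> K (nth [::] ws i.+1)]).

Definition is_infinite_tower (T : eqType) (K L : pred (seq T)) (w : nat -> seq T) : Prop :=
  (K (w 0) || L (w 0)) /\
  (forall i, [/\ subword (w i) (w i.+1),
                 K (w i) -> L (w i.+1) &
                 L (w i) -> K (w i.+1)]).

(* Main.v *)
Require Import Defs.
From mathcomp Require Import all_boot.
From Stdlib Require Import Classical.
From mathcomp Require Import zify.
Set Implicit Arguments.
Unset Strict Implicit.
Unset Printing Implicit Defensive.


Definition maxl (s : seq nat) := foldr maxn 0 s.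

Fixpoint sig (s : seq nat) : seq nat :=
  match s with
  | [::] => [::]
  | x :: s' => if maxl s' <= x then x :: sig s' else sig s'
  end.

Fixpoint lexle (a b : seq nat) : bool :=
  match a, b with
  | [::], _ => true
  | _ :: _, [::] => false
  | x :: a', y :: b' => (x < y) || ((x == y) && lexle a' b')
  end.

Fixpoint sdec (l : seq nat) : bool :=
  match l with
  | x :: ((y :: _) as l') => (y < x) && sdec l'
  | _ => true
  end.

Definition code (l : seq nat) := sumn [seq 2 ^ x | x <- l].

Lemma maxl_subseq u w : subseq u w -> maxl u <= maxl w.
Proof.
elim: w u => [|x w IH] [|y u] //=.
case: eqP => [->|_] H.
  by rewrite geq_max leq_maxl /= (leq_trans (IH _ H)) // leq_maxr.
by apply: (leq_trans (IH _ H)); rewrite leq_maxr.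
Qed.

Lemma sig_nil s : (sig s == [::]) = (s == [::]).
Proof.
elim: s => [|x s IH] //=.
case: ifP => // H; apply/eqP => E.
move: IH; rewrite E eqxx => /esym/eqP Es; move: H; rewrite Es /= leq0n //.
Qed.

Lemma sig_head s : s != [::] -> exists l, sig s = maxl s :: l.
Proof.
elim: s => [|x s IH] //= _.
case: ifP => H.
  by exists (sig s); congr (_ :: _); apply/esym/maxn_idPl.
have Hs : s != [::] by case: s H {IH}.
case: (IH Hs) => l ->; exists l; congr (_ :: _).
by apply/esym/maxn_idPr; rewrite ltnW // ltnNge H.
Qed.

Lemma sig_subseq s : subseq (sig s) s.
Proof.
elim: s => [|x s IH] //=; case: ifP => _.
  by rewrite eqxx.
exact: (subseq_trans IH (subseq_cons _ _)).
Qed.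

Lemma mem_le_maxl s y : y \in s -> y <= maxl s.
Proof.
elim: s => [|x s IH] //=; rewrite inE => /orP [/eqP ->|H].
  by rewrite leq_maxl.
by rewrite (leq_trans (IH H)) // leq_maxr.
Qed.

Lemma lexle_refl a : lexle a a.
Proof. by elim: a => //= x a ->; rewrite eqxx orbT. Qed.

Lemma lexle_trans b a c : lexle a b -> lexle b c -> lexle a c.
Proof.
elim: a b c => [|x a IH] [|y b] [|z c] //=.
case/orP=> [Hxy|/andP[/eqP <- Hab]] /orP [Hyz|/andP[/eqP <- Hbc]].
- by rewrite (ltn_trans Hxy Hyz).
- by rewrite Hxy.
- by rewrite Hyz.
- by rewrite eqxx (IH _ _ Hab Hbc) orbT.
Qed.

Lemma lexle_anti a b : lexle a b -> lexle b a -> a = b.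
Proof.
elim: a b => [|x a IH] [|y b] //=.
case/orP=> [Hxy|/andP[/eqP <- Hab]] /orP [Hyx|/andP[/eqP Eyx Hba]].
- by move: (ltn_trans Hxy Hyx); rewrite ltnn.
- by move: Hxy; rewrite Eyx ltnn.
- by move: Hyx; rewrite ltnn.
- by rewrite (IH _ Hab Hba).
Qed.

Lemma lexle_total a b : lexle a b || lexle b a.
Proof.
elim: a b => [|x a IH] [|y b] //=.
case: (ltngtP x y) => //= ->; rewrite eqxx /=; exact: IH.
Qed.

Lemma lexle_cons_ge x l : (forall y, y \in l -> y <= x) -> lexle l (x :: l).
Proof.
elim: l x => [|y l IH] x //= H.
have Hy : y <= x by apply: H; rewrite inE eqxx.
move: Hy; rewrite leq_eqVlt => /orP [/eqP Eyx|->] //.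
rewrite Eyx eqxx ltnn /=; apply: IH => z Hz.
by apply: H; rewrite inE Hz orbT.
Qed.

Lemma sig_cons_mono x s : lexle (sig s) (sig (x :: s)).
Proof.
rewrite [sig (x :: s)]/=; case: ifP => H; last exact: lexle_refl.
apply: lexle_cons_ge => y /(mem_subseq (sig_subseq s)) /mem_le_maxl Hy.
exact: leq_trans Hy H.
Qed.

Lemma sig_mono u w : subseq u w -> lexle (sig u) (sig w).
Proof.
elim: w u => [|x w IH] [|y u] //.
rewrite [subseq _ _]/=; case: eqP => [<-|Hne] H; last first.
  exact: lexle_trans (IH _ H) (sig_cons_mono x w).
have Hm := maxl_subseq H.
rewrite /=; case: (leqP (maxl w) y) => Hw.
  by rewrite (leq_trans Hm Hw) /= ltnn eqxx /= IH.
case: (leqP (maxl u) y) => Hu; last exact: IH.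
have Hwn : w != [::] by case: w Hw {IH H Hm}.
by case: (sig_head Hwn) => l ->; rewrite /= Hw.
Qed.

Section Split.
Variable p : nat.
Definition top (x : nat) := p <= x.
Definition pi (s : seq nat) := filter top s.
Fixpoint lowsuf (s : seq nat) : seq nat :=
  match s with
  | [::] => [::]
  | x :: s' => if has top s' then lowsuf s' else if top x then s' else s
  end.

Lemma lowsuf_notop s : ~~ has top s -> lowsuf s = s.
Proof.
elim: s => [|x s IH] //=; rewrite negb_or => /andP [Hx Hs].
by rewrite (negbTE Hs) (negbTE Hx).
Qed.

Lemma lowsuf_cons_sub x w : subseq (lowsuf w) (lowsuf (x :: w)).
Proof.
rewrite [lowsuf (x :: w)]/=; case: ifP => H; first exact: subseq_refl.
rewrite lowsuf_notop ?H //; case: ifP => _; first exact: subseq_refl.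
exact: subseq_cons.
Qed.

Lemma has_subseq (a : pred nat) u w : subseq u w -> has a u -> has a w.
Proof.
move=> H /hasP [z Hz Ha]; apply/hasP; exists z => //; exact: (mem_subseq H).
Qed.

Lemma pi_subseq u w : subseq u w -> subseq (pi u) (pi w).
Proof.
move=> H; rewrite /pi subseq_filter filter_all /=.
exact: subseq_trans (filter_subseq _ _) H.
Qed.

Lemma pi_nil s : (pi s == [::]) = ~~ has top s.
Proof. by rewrite /pi has_filter negbK. Qed.

Lemma lowsuf_mono u w :
  subseq u w -> sig (pi u) = sig (pi w) -> subseq (lowsuf u) (lowsuf w).
Proof.
elim: w u => [|x w IH] [|y u] //; try by move=> *; exact: sub0seq.
move=> H; move: (H); rewrite [subseq _ _]/= => H'.
case: eqP H' => [Exy|Hne] H' Es.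
  subst y.
  have Hm := maxl_subseq (pi_subseq H').
  case Tx: (top x).
    have Epu : pi (x :: u) = x :: pi u by rewrite /pi /= Tx.
    have Epw : pi (x :: w) = x :: pi w by rewrite /pi /= Tx.
    rewrite Epu Epw /= in Es; rewrite /= Tx.
    case Hu: (has top u).
      have Hw : has top w by apply: has_subseq H' Hu.
      rewrite Hw; apply: IH => //.
      move: Es; case: (leqP (maxl (pi w)) x) => Hw2.
        by rewrite (leq_trans Hm Hw2) => -[].
      have Hwn : pi w != [::] by rewrite pi_nil Hw.
      case: (sig_head Hwn) => l ->.
      case: (leqP (maxl (pi u)) x) => // _ [] E.
      by move: Hw2; rewrite -E ltnn.
    have Pu : pi u = [::] by apply/eqP; rewrite pi_nil Hu.
    case Hw: (has top w); last by [].
    exfalso; move: Es; rewrite Pu /=.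
    have Hwn : pi w != [::] by rewrite pi_nil Hw.
    case: (leqP (maxl (pi w)) x) => Hw2.
      by case: (sig_head Hwn) => l -> [].
    by case: (sig_head Hwn) => l -> [] E; move: Hw2; rewrite -E ltnn.
  have Epu : pi (x :: u) = pi u by rewrite /pi /= Tx.
  have Epw : pi (x :: w) = pi w by rewrite /pi /= Tx.
  rewrite Epu Epw in Es; rewrite /= Tx.
  case Hu: (has top u).
    by rewrite (has_subseq H' Hu); apply: IH.
  have Pu : pi u = [::] by apply/eqP; rewrite pi_nil Hu.
  have Hw : ~~ has top w.
    rewrite -pi_nil -sig_nil -Es Pu //.
  by rewrite (negbTE Hw) /= eqxx.
have E1 : sig (pi (y :: u)) = sig (pi w).
  apply: lexle_anti; first exact: sig_mono (pi_subseq H').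
  rewrite Es; exact: sig_mono (pi_subseq (subseq_cons _ _)).
exact: subseq_trans (IH _ H' E1) (lowsuf_cons_sub x w).
Qed.

Lemma lowsuf_subseq s : subseq (lowsuf s) s.
Proof.
elim: s => [|x s IH] //; rewrite [lowsuf _]/=; case: ifP => _.
  exact: subseq_trans IH (subseq_cons _ _).
case: ifP => _; [exact: subseq_cons | exact: subseq_refl].
Qed.

End Split.

Definition lexlt a b := lexle a b && (a != b).

Lemma maxl_rcons s a : maxl (rcons s a) = maxn (maxl s) a.
Proof.
elim: s => [|x s IH] /=; first by rewrite max0n maxn0.
by rewrite IH maxnA.
Qed.

Lemma sig_rcons_lt z x a :
  x < a -> lexlt (sig (rcons z x)) (sig (rcons (rcons z x) a)).
Proof.
move=> Hxa; elim: z => [|y z IH].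
  rewrite /lexlt /= maxn0 leqNgt Hxa /= Hxa /=.
  by apply/eqP => -[E]; move: Hxa; rewrite E ltnn.
rewrite [sig (rcons (y :: z) x)]/= [sig (rcons (rcons (y :: z) x) a)]/=.
rewrite !maxl_rcons !geq_max.
case HM: ((maxl z <= y) && (x <= y)) => /=; last exact: IH.
case: (leqP a y) => Hay /=.
  move: IH => /andP [H1 H2]; rewrite /lexlt /= ltnn eqxx H1 /=.
  by apply: contra H2 => /eqP [->].
have Hn : rcons (rcons z x) a != [::] by case: (rcons z x).
case: (sig_head Hn) => l ->; rewrite !maxl_rcons.
move/andP: HM => [H1 H2].
have -> : maxn (maxn (maxl z) x) a = a.
  apply/maxn_idPr; rewrite geq_max; apply/andP; split; apply: ltnW.
    exact: leq_ltn_trans H1 Hay.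
  exact: leq_ltn_trans H2 Hay.
rewrite /lexlt /= Hay /=; apply: contraTneq Hay => -[->]; by rewrite ltnn.
Qed.

Lemma code_lt l b : sdec l -> (if l is y :: _ then y < b else true) -> code l < 2 ^ b.
Proof.
elim: l b => [|x l IH] b /=; first by rewrite expn_gt0.
move=> Hs Hxb.
have Hl : code l < 2 ^ x.
  apply: IH; first by case: l Hs => // y l /andP [].
  by case: l Hs => // y l /andP [].
rewrite /code /= -/(code l).
apply: (leq_trans (n := 2 ^ x + 2 ^ x)); first by rewrite ltn_add2l.
by rewrite addnn -mul2n -expnS leq_exp2l.
Qed.

Lemma code_lexlt a b : sdec a -> sdec b -> lexle a b -> a != b -> code a < code b.
Proof.
elim: a b => [|x a IH] [|y b] //=.
  by move=> _ _ _ _; rewrite /code /= ltn_addr // expn_gt0.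
move=> Ha Hb /orP [Hxy|/andP [/eqP Exy Hab]] Hne.
  have H1 : code (x :: a) < 2 ^ x.+1 by apply: code_lt => //=.
  apply: (leq_trans H1); rewrite /code /=.
  by apply: leq_trans (leq_addr _ _); rewrite leq_exp2l.
subst y; rewrite /code /= ltn_add2l; apply: IH => //.
- by case: a Ha {Hab Hne} => // z a /andP [].
- by case: b Hb {Hab Hne} => // z b /andP [].
- by apply: contra Hne => /eqP ->.
Qed.


Lemma code_lexle a b : sdec a -> sdec b -> lexle a b -> code a <= code b.
Proof.
move=> Ha Hb H; case: (eqVneq a b) => [->//|Hne].
exact: ltnW (code_lexlt Ha Hb H Hne).
Qed.

Lemma mono_le (f : nat -> nat) : (forall k, f k <= f k.+1) ->
  forall i j, i <= j -> f i <= f j.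
Proof.
move=> Hf i j Hij; rewrite -(subnKC Hij).
elim: (j - i) => [|d IH]; first by rewrite addn0.
by rewrite addnS (leq_trans IH (Hf _)).
Qed.

Lemma ev_const B : forall d (f : nat -> nat), (forall k, f k <= f k.+1) ->
  (forall k, f k < B) -> B - f 0 <= d ->
  exists N, forall k, N <= k -> f k = f N.
Proof.
elim=> [|d IH] f Hf HB Hd.
  by move: (HB 0); rewrite ltnNge -subn_eq0; move: Hd; rewrite leqn0 => ->.
case: (classic (exists k, f k <> f 0)) => [[k0 Hk0]|Hn].
  have Hlt : f 0 < f k0.
    by rewrite ltn_neqAle (mono_le Hf (leq0n k0)) andbT; apply/eqP => E; apply: Hk0.
  have Hg : forall k, f (k0 + k) <= f (k0 + k.+1) by move=> k; rewrite addnS.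
  have Hd' : B - f (k0 + 0) <= d by rewrite addn0; move: (HB k0) Hlt Hd; lia.
  have [N HN] := IH (fun i => f (k0 + i)) Hg (fun k => HB (k0 + k)) Hd'.
  exists (k0 + N) => k Hk.
  have Hk' : N <= k - k0 by lia.
  have := HN _ Hk'; rewrite subnKC //; lia.
exists 0 => k _; apply: NNPP => Hk; apply: Hn; by exists k.
Qed.

Lemma strict_bounded (g : nat -> nat) N B :
  (forall k, N <= k -> g k < g k.+1) -> (forall k, g k < B) -> False.
Proof.
move=> Hg HB.
have H : forall i, i <= g (N + i).
  elim=> [|i IH] //; rewrite addnS; exact: leq_ltn_trans IH (Hg _ (leq_addr _ _)).
by move: (HB (N + B)); rewrite ltnNge H.
Qed.

Definition Ylast (y : seq nat) := (y == [::]) || (last 0 y != 0).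
Definition Dprop (z : seq nat) := [&& z != [::], last 0 z == 0 & sdec (sig z)].
Definition PK p B s := [&& sdec (sig (pi p s)), Ylast (lowsuf p s) & all (fun x => x < B) s].
Definition PL p B s := Dprop (lowsuf p s) && all (fun x => x < B) s.

Lemma code_bound l B : sdec l -> all (fun x => x < B) l -> code l < 2 ^ B.
Proof.
move=> H1 H2; apply: code_lt => //; case: l H1 H2 => //= x l _ /andP [] //.
Qed.

Lemma all_sub B u w : subseq u w -> all (fun x => x < B) w -> all (fun x => x < B) u.
Proof. move=> H /allP Hw; apply/allP => x Hx; apply: Hw; exact: mem_subseq H _ Hx. Qed.

Lemma drop_last_sub (z y : seq nat) c a :
  subseq (rcons z c) (rcons y a) -> c != a -> subseq (rcons z c) y.
Proof.
rewrite -subseq_rev !rev_rcons /= => H Hne; move: H; rewrite (negbTE Hne).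
by rewrite -rev_rcons subseq_rev.
Qed.

Theorem no_inf p B (W : nat -> seq nat) :
  (forall i, subseq (W i) (W i.+1)) ->
  (forall k, PK p B (W k.*2)) -> (forall k, PL p B (W k.*2.+1)) -> False.
Proof.
move=> Hs HK HL.
have Hle : forall i j, i <= j -> subseq (W i) (W j).
  move=> i j Hij; rewrite -(subnKC Hij); elim: (j - i) => [|d IH].
    by rewrite addn0 subseq_refl.
  by rewrite addnS (subseq_trans IH (Hs _)).
have SK : forall k, sdec (sig (pi p (W k.*2))) by move=> k; case/and3P: (HK k).
have BK : forall k, all (fun x => x < B) (W k.*2) by move=> k; case/and3P: (HK k).
have BL : forall k, all (fun x => x < B) (W k.*2.+1) by move=> k; case/andP: (HL k).
have Mono : forall i j, i <= j -> lexle (sig (pi p (W i))) (sig (pi p (W j))).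
  by move=> i j Hij; apply: sig_mono; apply: pi_subseq; apply: Hle.
pose a k := code (sig (pi p (W k.*2))).
have Ha1 : forall k, a k <= a k.+1.
  move=> k; apply: code_lexle; [exact: SK | exact: SK | apply: Mono].
  by rewrite doubleS; apply: leq_trans (leqnSn _) (leqnSn _).
have Ha2 : forall k, a k < 2 ^ B.
  move=> k; apply: code_bound; first exact: SK.
  exact: all_sub (subseq_trans (sig_subseq _) (filter_subseq _ _)) (BK k).
have [N HN] := ev_const Ha1 Ha2 (leqnn _).
have Eq : forall k, N <= k -> sig (pi p (W k.*2)) = sig (pi p (W k.+1.*2)).
  move=> k Hk; case: (eqVneq (sig (pi p (W k.*2))) (sig (pi p (W k.+1.*2)))) => // Hne.
  have := code_lexlt (SK k) (SK k.+1) (Mono _ _ _) Hne.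
  rewrite -/(a k) -/(a k.+1) HN // HN ?(leq_trans Hk) // ltnn.
  by move=> H; exfalso; apply: notF; apply: H; rewrite doubleS; apply: leq_trans (leqnSn _) (leqnSn _).
have EqL1 : forall k, N <= k -> sig (pi p (W k.*2)) = sig (pi p (W k.*2.+1)).
  move=> k Hk; apply: lexle_anti; first exact: Mono.
  rewrite Eq //; apply: Mono; by rewrite doubleS.
have EqL2 : forall k, N <= k -> sig (pi p (W k.*2.+1)) = sig (pi p (W k.+1.*2)).
  by move=> k Hk; rewrite -EqL1 // Eq.
pose b k := code (sig (lowsuf p (W k.*2.+1))).
apply: (@strict_bounded b N (2 ^ B)).
  move=> k Hk.
  have H1 : subseq (lowsuf p (W k.*2.+1)) (lowsuf p (W k.+1.*2)).
    by apply: lowsuf_mono; [rewrite doubleS; exact: Hs | exact: EqL2].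
  have H2 : subseq (lowsuf p (W k.+1.*2)) (lowsuf p (W k.+1.*2.+1)).
    by apply: lowsuf_mono; [exact: Hs | apply: EqL1; exact: leqW].
  case/andP: (HL k) => /and3P [Zn Zl Zs] _.
  case/andP: (HL k.+1) => /and3P [Zn' Zl' Zs'] _.
  case/and3P: (HK k.+1) => _ Yl _.
  rewrite /b; move: H1 H2 Yl Zn Zl Zs Zs'.
  move: (lowsuf p (W k.*2.+1)) (lowsuf p (W k.+1.*2)) (lowsuf p (W k.+1.*2.+1)).
  move=> z y z' H1 H2 Yl Zn Zl Zs Zs'.
  case/lastP: y H1 H2 Yl => [|y' c] H1 H2 Yl.
    by move: H1; rewrite subseq0 (negbTE Zn).
  case/lastP: z H1 Zn Zl Zs => [|z0 d] // H1 _ Zl Zs.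
  have Yc : c != 0.
    by move: Yl; rewrite /Ylast last_rcons; case: (y') => //.
  rewrite last_rcons in Zl.
  have H3 : subseq (rcons (rcons z0 d) c) (rcons y' c).
    rewrite -[rcons (rcons z0 d) c]cats1 -[rcons y' c]cats1.
    apply: cat_subseq; last exact: subseq_refl.
    apply: drop_last_sub H1 _; by rewrite (eqP Zl) eq_sym.
  have H4 := sig_mono (subseq_trans H3 H2).
  have H5 : lexlt (sig (rcons z0 d)) (sig (rcons (rcons z0 d) c)).
    by apply: sig_rcons_lt; rewrite (eqP Zl) lt0n.
  case/andP: H5 => H5 H6.
  apply: code_lexlt => //; first exact: lexle_trans H5 H4.
  apply: contra H6 => /eqP E; apply/eqP; apply: lexle_anti => //; by rewrite E.
move=> k; apply: code_bound; first by case/andP: (HL k) => /and3P [].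
apply: all_sub (BL k).
exact: subseq_trans (sig_subseq _) (lowsuf_subseq _ _).
Qed.


Section Acc.
Variables (n : nat) (tr : nat -> nat -> nat -> bool) (fin : nat -> bool).

Fixpoint accN (q : nat) (s : seq nat) : bool :=
  match s with
  | [::] => fin q
  | a :: s' => [exists q' : 'I_n, tr q a q' && accN q' s']
  end.

Definition mkA k (ini : nat -> bool) : nfa n k :=
  NFA [set q : 'I_n | ini q] [set q : 'I_n | fin q]
      (fun q a => [set q' : 'I_n | tr q a q']).

Lemma reach_acc k (ini : nat -> bool) (w : seq 'I_k) (S : {set 'I_n}) :
  (nfa_reach (mkA k ini) S w :&: nfa_final (mkA k ini) != set0) =
  [exists q : 'I_n, (q \in S) && accN q (map val w)].
Proof.
elim: w S => [|a w IH] S.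
  apply/set0Pn/existsP => [[q]|[q /andP [Hq Hf]]].
    by rewrite inE /= inE => /andP [Hq Hf]; exists q; rewrite Hq.
  by exists q; rewrite inE Hq inE.
rewrite /nfa_reach /= -/(nfa_reach _ _ _) IH.
apply/existsP/existsP => [[q' /andP [Hq' Hacc]]|[q /andP [Hq /existsP [q' /andP [Ht Hacc]]]]].
  move: Hq' => /bigcupP [q Hq]; rewrite inE => Ht.
  by exists q; rewrite Hq /=; apply/existsP; exists q'; rewrite Ht.
exists q'; rewrite Hacc andbT; apply/bigcupP; exists q => //; by rewrite inE.
Qed.

Lemma lang_mkA k (ini : nat -> bool) (w : seq 'I_k) :
  nfa_lang (mkA k ini) w = [exists q : 'I_n, ini q && accN q (map val w)].
Proof.
rewrite /nfa_lang reach_acc; apply: eq_existsb => q; by rewrite inE.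
Qed.
End Acc.


Section KL.
Variable p : nat.

Definition trK (q a q' : nat) : bool :=
  if 2 <= q then ((a < q + p - 2) && (q' == q)) || ((a == q + p - 2) && (q' < q))
  else if q == 1 then (a < p) && ((q' == 1) || ((a != 0) && (q' == 0)))
  else false.

Definition trL (q a q' : nat) : bool :=
  if 2 <= q then ((a < q - 2) && (q' == q)) ||
                 ((a == q - 2) && (if q == 2 then q' == 0 else (2 <= q') && (q' < q)))
  else if q == 1 then (q' == 1) || ((p <= a) && (2 <= q'))
  else false.

Definition fin0 (q : nat) := q == 0.

Definition CK (q : nat) (s : seq nat) : bool :=
  if q == 0 then s == [::]
  else if q == 1 then [&& s != [::], all (fun x => x < p) s & last 0 s != 0]
  else [&& sdec (sig (pi p s)), head 0 (sig (pi p s)) == q + p - 2,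
           sig (pi p s) != [::] & Ylast (lowsuf p s)].

Lemma pi_low s : all (fun x => x < p) s -> pi p s = [::].
Proof.
move=> H; apply/eqP; rewrite pi_nil; apply/hasPn => x Hx.
by rewrite /top -ltnNge; exact: (allP H).
Qed.

Lemma has_pi s : has (top p) s = (pi p s != [::]).
Proof. by rewrite pi_nil negbK. Qed.

Lemma sig_pi_nil s : (sig (pi p s) != [::]) = has (top p) s.
Proof. by rewrite has_pi sig_nil. Qed.

Lemma last_nonnil (a : nat) s : s != [::] -> last a s = last 0 s.
Proof. by case: s. Qed.

Lemma sig_head_eq s l : sig s = l -> l != [::] -> maxl s = head 0 l.
Proof.
move=> E Hl; have Hs : s != [::] by apply: contra Hl => /eqP Es; rewrite -E Es.
by case: (sig_head Hs) => l' E'; rewrite -E E'.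
Qed.

Lemma accK_CK s q : accN (p.+2) trK fin0 q s -> CK q s.
Proof.
elim: s q => [|a s IH] q /=.
  by rewrite /fin0 /CK => /eqP ->.
case/existsP => -[q' Hq'n] /= /andP [Ht /IH Hc].
rewrite /trK in Ht; rewrite /CK.
case: (leqP 2 q) Ht => Hq2 Ht.
  have Hq0 : (q == 0) = false by case: q Hq2 {Ht}.
  have Hq1 : (q == 1) = false by case: q Hq2 {Ht Hq0} => [|[]].
  rewrite Hq0 Hq1.
  case/orP: Ht => /andP [Ha Hq'].
    rewrite (eqP Hq') /CK Hq0 Hq1 in Hc.
    case/and4P: Hc => H1 H2 H3 H4.
    have Hmax : maxl (pi p s) = q + p - 2 by rewrite (sig_head_eq (erefl _) H3) (eqP H2).
    have Hhas : has (top p) s by rewrite -sig_pi_nil.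
    have Epi : sig (pi p (a :: s)) = sig (pi p s).
      rewrite /pi /=; case: (top p a) => //=; rewrite -/(pi p s) Hmax leqNgt Ha //.
    by rewrite Epi H1 H2 H3 /= Hhas.
  rewrite (eqP Ha).
  have Tt : top p (q + p - 2) by rewrite /top; lia.
  move: Hc; rewrite /CK.
  case: q' Hq'n Hq' => [|[|q']] Hq'n Hq' /=.
  - by move=> /eqP ->; rewrite /pi /= Tt /= eqxx.
  - move=> /and3P [H1 H2 H3].
    have Hp : pi p s = [::] by apply: pi_low.
    have Hhas : has (top p) s = false by apply/negbTE; rewrite -pi_nil Hp.
    rewrite /pi /= Tt /= -/(pi p s) Hp /= eqxx Hhas /=.
    by rewrite /Ylast H3 orbT.
  move=> /and4P [H1 H2 H3 H4].
  have Hmax : maxl (pi p s) = q'.+2 + p - 2 by rewrite (sig_head_eq (erefl _) H3) (eqP H2).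
  have Hhas : has (top p) s by rewrite -sig_pi_nil.
  have Hle : q'.+2 + p - 2 <= q + p - 2 by move: Hq'; lia.
  have Epi : sig (pi p (q + p - 2 :: s)) = (q + p - 2) :: sig (pi p s).
    by rewrite /pi /= Tt /= -/(pi p s) Hmax Hle.
  rewrite Epi /= Hhas H4 eqxx andbT /= H1 andbT.
  case: (sig (pi p s)) H2 H3 => // x l /= /eqP -> _.
  by move: Hq'; lia.
case: q Hq2 Ht => [|[|q]] Hq2 Ht //=.
case/andP: Ht => Ha /orP [/eqP Eq'|/andP [Ha0 /eqP Eq']].
  move: Hc; rewrite /CK Eq' /= => /and3P [H1 H2 H3].
  by rewrite Ha H2 /= (last_nonnil _ H1) H3.
move: Hc; rewrite /CK Eq' /= => /eqP ->; by rewrite Ha Ha0.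
Qed.

Definition CL (q : nat) (s : seq nat) : bool :=
  if q == 0 then s == [::]
  else if q == 1 then has (top p) s && Dprop (lowsuf p s)
  else [&& s != [::], all (fun x => x < p) s, last 0 s == 0, sdec (sig s) & head 0 (sig s) == q - 2].

Lemma has_low s : all (fun x => x < p) s -> has (top p) s = false.
Proof. by move=> H; apply/negbTE; rewrite -pi_nil pi_low. Qed.

Lemma accL_CL s q : q < p.+2 -> accN (p.+2) trL fin0 q s -> CL q s.
Proof.
elim: s q => [|a s IH] q Hq /=.
  by rewrite /fin0 /CL => /eqP ->.
case/existsP => -[q' Hq'n] /= /andP [Ht Hacc]; have Hc := IH _ Hq'n Hacc.
rewrite /trL in Ht; rewrite /CL.
case: q Hq Ht => [|[|q]] Hq Ht //=.
  case/orP: Ht => [/eqP Eq'|/andP [Ta Hq'2]].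
    move: Hc; rewrite /CL Eq' /= => /andP [Hh HD].
    rewrite /=. move: Hh HD. set H := has _ s. move=> Hh HD. by rewrite Hh orbT.
  move: Hc; rewrite /CL; case: q' Hq'n Hq'2 {Hacc} => [|[|q']] //= _ _.
  case/and5P => H1 H2 H3 H4 H5.
  have Ta' : top p a by []. rewrite /=. set H := has _ s. have HH : H = false by rewrite /H has_low. rewrite HH Ta' /= /Dprop H1 H3 H4 //.
rewrite !subSS subn0 in Ht *.
case/orP: Ht => [/andP [Ha /eqP Eq']|/andP [/eqP Ea Hif]].
  move: Hc; rewrite /CL Eq' /= !subSS subn0 => /and5P [H1 H2 H3 H4 H5].
  have Hmax : maxl s = q by rewrite (sig_head_eq (erefl _) _) ?(eqP H5) // sig_nil.
  have Hap : a < p by move: Hq; rewrite !ltnS => Hq'; exact: ltn_trans Ha Hq'.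
  by rewrite Hap H2 (last_nonnil _ H1) H3 Hmax leqNgt Ha /= H4 H5.
subst a; case: q Hq Hif => [|q] Hq Hif /=.
  move: Hc; rewrite /CL (eqP Hif) /= => /eqP ->.
  by rewrite /= /maxl /= andbT; case: p Hq.
move: Hc; rewrite /CL; case: q' Hq'n Hif {Hacc} => [|[|q']] //= _ Hq'.
rewrite !subSS subn0 => /and5P [H1 H2 H3 H4 H5].
have Hmax : maxl s = q' by rewrite (sig_head_eq (erefl _) _) ?(eqP H5) // sig_nil.
have Hlt : q' <= q by move: Hq'; rewrite !ltnS.
rewrite H2 (last_nonnil _ H1) H3 /= Hmax (leq_trans Hlt (leqnSn _)) /= eqxx andbT.
rewrite andbT; move: Hq; rewrite !ltnS => -> /=.
by case: (sig s) H4 H5 => // y l /= -> /eqP ->; rewrite ltnS Hlt.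
Qed.

Lemma CK_PK q s : CK q s -> sdec (sig (pi p s)) && Ylast (lowsuf p s).
Proof.
rewrite /CK; case: q => [|[|q]] /=.
- by move=> /eqP ->.
- case/and3P=> H1 H2 H3; rewrite pi_low // lowsuf_notop ?has_low //.
  by rewrite /Ylast H3 orbT.
- by case/and4P=> -> _ _ ->.
Qed.

Lemma CL_PL q s : q != 0 -> CL q s -> Dprop (lowsuf p s).
Proof.
rewrite /CL; case: q => [|[|q]] //= _.
- by case/andP.
- case/and5P=> H1 H2 H3 H4 _; rewrite lowsuf_notop ?has_low //.
  by rewrite /Dprop H1 H3 H4.
Qed.
End KL.


Fixpoint ruler (e n : nat) : seq nat :=
  if e is e'.+1 then
    (if n < 2 ^ e' then ruler e' n else ruler e' (2 ^ e').-1 ++ e' :: ruler e' (n - 2 ^ e'))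
  else [::].

Lemma R_lt e n : all (fun x => x < e) (ruler e n).
Proof.
elim: e n => [|e IH] n //=; case: ifP => _.
  by apply: sub_all (IH n) => x /= /ltnW.
rewrite all_cat /= ltnSn /=; apply/andP; split; apply: sub_all (IH _) => x /= /ltnW //.
Qed.

Lemma R_sub e n : n.+1 < 2 ^ e -> subseq (ruler e n) (ruler e n.+1).
Proof.
elim: e n => [|e IH] n /=; first by rewrite expn0.
move=> Hn; case: (ltnP n.+1 (2 ^ e)) => H1.
  by rewrite (ltnW H1); apply: IH.
case: (ltnP n (2 ^ e)) => H2.
  have E : n = (2 ^ e).-1 by move: H1 H2; lia.
  rewrite -E; exact: prefix_subseq.
rewrite subSn //; apply: cat_subseq; first exact: subseq_refl.
rewrite /= eqxx; apply: IH; rewrite expnS in Hn; move: Hn H2; lia.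
Qed.

Lemma R_nil e n : n < 2 ^ e -> (ruler e n == [::]) = (n == 0).
Proof.
elim: e n => [|e IH] n /=; first by rewrite expn0; case: n.
move=> Hn; case: ifP => H.
  exact: IH.
have He : 0 < 2 ^ e by rewrite expn_gt0.
have Hn0 : (n == 0) = false by move: H He; lia.
by rewrite Hn0; case: (ruler e _).
Qed.

Lemma R_last e n : 0 < n -> n < 2 ^ e -> (last 0 (ruler e n) == 0) = odd n.
Proof.
elim: e n => [|e IH] n /=; first by rewrite expn0; case: n.
move=> Hn0 Hn; case: ifP => H; first exact: IH.
rewrite last_cat /=.
case: (ltngtP n (2 ^ e)) => H2.
- by rewrite H2 in H.
- have Hn' : 0 < n - 2 ^ e by rewrite subn_gt0.
  have Hlt : n - 2 ^ e < 2 ^ e by rewrite expnS in Hn; move: Hn H2; lia.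
  have Hne : ruler e (n - 2 ^ e) != [::] by rewrite R_nil // -lt0n.
  rewrite last_nonnil // IH // oddB ?(ltnW H2) // oddX /=.
  case: e {IH H Hlt Hne Hn'} Hn H2 => [|e] //=; last by rewrite addbF.
  by rewrite expn1 expn0; case: n Hn0 => [|[|n]].
- have -> : ruler e (n - 2 ^ e) = [::] by apply/eqP; rewrite H2 subnn R_nil ?expn_gt0.
  by rewrite /= H2 oddX orbF.
Qed.

Lemma R_low p e n : p <= e -> n < 2 ^ p -> ruler e n = ruler p n.
Proof.
elim: e => [|e IH] He Hn; first by case: p He Hn => // _ _; rewrite leqn0 => /eqP ->.
case: (leqP p e) => Hpe.
  rewrite /= ifT ?IH //; apply: leq_trans Hn _; by rewrite leq_exp2l.
by have -> : p = e.+1 by apply/eqP; rewrite eqn_leq He Hpe.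
Qed.

Section Acc2.
Variable p : nat.
Notation accK := (accN p.+2 (trK p) fin0).
Notation accL := (accN p.+2 (trL p) fin0).

Lemma accK_Y s : s != [::] -> all (fun x => x < p) s -> last 0 s != 0 -> accK 1 s.
Proof.
elim: s => [|a s IH] // _ /= /andP [Ha Hs] Hl.
apply/existsP; case: (eqVneq s [::]) => [Es|Hne].
  subst s; exists (@Ordinal p.+2 0 isT); apply/andP; split => //.
  by rewrite /trK /= Ha; move: Hl => /= ->.
exists (@Ordinal p.+2 1 isT); apply/andP; split; first by rewrite /trK /= Ha.
by apply: IH => //; rewrite -(last_nonnil a Hne).
Qed.

Lemma accK_top q q' x r : 2 <= q -> q < p.+2 -> all (fun y => y < q + p - 2) x ->
  q' < q -> accK q' r -> accK q (x ++ (q + p - 2) :: r).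
Proof.
move=> Hq2 Hqp Hx Hq' Hr; elim: x Hx => [|a x IH] /= => [_|/andP [Ha Hx]];
  apply/existsP.
  exists (Ordinal (ltn_trans Hq' Hqp)); apply/andP; split => //.
  by rewrite /trK /= Hq2 eqxx Hq' orbT.
exists (Ordinal Hqp); apply/andP; split; last exact: IH.
by rewrite /trK /= Hq2 Ha eqxx.
Qed.

Lemma K_accept d n : d <= p -> n < 2 ^ (p + d) -> ~~ odd n ->
  exists q, q < d + 2 /\ accK q (ruler (p + d) n).
Proof.
elim: d n => [|d IH] n Hd Hn Ho.
  rewrite addn0 in Hn *.
  case: (posnP n) => [->|Hn0].
    have h0 : 0 < 2 ^ p by rewrite expn_gt0.
    by exists 0; split => //; move: (R_nil h0); rewrite eqxx => /eqP ->.
  exists 1; split => //; apply: accK_Y.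
  - by rewrite R_nil // -lt0n.
  - exact: R_lt.
  - by rewrite R_last // (negbTE Ho).
rewrite addnS /= in Hn *.
case: ifP => H.
  have [q [Hq Ha]] := IH n (ltnW Hd) H Ho.
  by exists q; split => //; apply: ltn_trans Hq _.
have Hp : 0 < p by move: Hd; lia.
have He : 0 < 2 ^ (p + d) by rewrite expn_gt0.
have Hlt : n - 2 ^ (p + d) < 2 ^ (p + d) by rewrite expnS in Hn; move: Hn H; lia.
have Ho' : ~~ odd (n - 2 ^ (p + d)).
  rewrite oddB ?oddX; last by move: H; lia.
  have Hpd : (p + d == 0) = false by move: Hp; lia.
  by rewrite Hpd (negbTE Ho).
have [q' [Hq' Ha]] := IH _ (ltnW Hd) Hlt Ho'.
exists (d + 2); split; first by lia.
have Ht := @accK_top (d + 2) q' (ruler (p + d) (2 ^ (p + d)).-1) (ruler (p + d) (n - 2 ^ (p + d))).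
rewrite (_ : d + 2 + p - 2 = p + d) in Ht; last by lia.
apply: Ht => //; try lia; exact: R_lt.
Qed.
End Acc2.

Section Acc3.
Variable p : nat.
Notation accL := (accN p.+2 (trL p) fin0).

Lemma accL_step q q' x r : 3 <= q -> q < p.+2 -> all (fun y => y < q - 2) x ->
  2 <= q' -> q' < q -> accL q' r -> accL q (x ++ (q - 2) :: r).
Proof.
move=> Hq3 Hqp Hx Hq'2 Hq' Hr; elim: x Hx => [|a x IH] /= => [_|/andP [Ha Hx]];
  apply/existsP.
  exists (Ordinal (ltn_trans Hq' Hqp)); apply/andP; split => //.
  rewrite /trL ifT; last by lia.
  rewrite ifF; last by lia.
  by rewrite eqxx Hq'2 Hq' orbT.
exists (Ordinal Hqp); apply/andP; split; last exact: IH.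
rewrite /trL ifT; last by lia.
by rewrite Ha eqxx.
Qed.

Lemma accL_zero : 0 < p -> accL 2 [:: 0].
Proof.
move=> Hp; apply/existsP; exists (@Ordinal p.+2 0 isT); apply/andP; split => //.
Qed.

Lemma L_low e n : e <= p -> 0 < n -> n < 2 ^ e -> odd n ->
  exists i, i < e /\ accL (i + 2) (ruler e n).
Proof.
elim: e n => [|e IH] n He Hn0 Hn Ho; first by move: Hn Hn0; rewrite expn0; lia.
rewrite /=; case: ifP => H.
  have [i [Hi Ha]] := IH n (ltnW He) Hn0 H Ho.
  by exists i; split => //; apply: ltn_trans Hi _.
case: (ltngtP n (2 ^ e)) => H2.
- by rewrite H2 in H.
- have He1 : 0 < e.
    case: e {IH He H} Hn H2 => // Hn H2; move: Hn H2; rewrite expn1 expn0; lia.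
  have Hlt : n - 2 ^ e < 2 ^ e by rewrite expnS in Hn; move: Hn H2; lia.
  have Ho' : odd (n - 2 ^ e).
    rewrite oddB ?oddX; last by lia.
    have Hpd : (e == 0) = false by lia.
    by rewrite Hpd Ho.
  have Hn' : 0 < n - 2 ^ e by rewrite subn_gt0.
  have [i [Hi Ha]] := IH _ (ltnW He) Hn' Hlt Ho'.
  exists e; split => //.
  have Ht := @accL_step (e + 2) (i + 2) (ruler e (2 ^ e).-1) (ruler e (n - 2 ^ e)).
  rewrite (_ : e + 2 - 2 = e) in Ht; last by lia.
  apply: Ht => //; try lia; exact: R_lt.
- have He0 : e = 0.
    move: Ho; rewrite H2 oddX orbF; by move/eqP.
  subst e; exists 0; split => //=.
  by apply: accL_zero; move: He; lia.
Qed.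

Lemma accL_G x r : accL 1 r -> accL 1 (x ++ r).
Proof.
move=> Hr; elim: x => [|a x IH] //=; apply/existsP.
by exists (@Ordinal p.+2 1 isT); rewrite IH andbT /trL /=.
Qed.

Lemma accL_G_exit a q' r : p <= a -> 2 <= q' -> q' < p.+2 -> accL q' r -> accL 1 (a :: r).
Proof.
move=> Ha Hq2 Hqp Hr /=; apply/existsP; exists (Ordinal Hqp); rewrite Hr andbT /trL /=.
by rewrite Ha Hq2 orbT.
Qed.

Lemma L_top d n : d <= p -> 2 ^ p <= n -> n < 2 ^ (p + d) -> odd n -> accL 1 (ruler (p + d) n).
Proof.
elim: d n => [|d IH] n Hd Hpn Hn Ho.
  by move: Hpn Hn; rewrite addn0; lia.
rewrite addnS /= in Hn *.
case: ifP => H; first exact: IH (ltnW Hd) Hpn H Ho.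
have Hp : 0 < p by move: Hd; lia.
have Hlt : n - 2 ^ (p + d) < 2 ^ (p + d) by rewrite expnS in Hn; move: Hn H; lia.
have Ho' : odd (n - 2 ^ (p + d)).
  rewrite oddB ?oddX; last by move: H; lia.
  have Hpd : (p + d == 0) = false by move: Hp; lia.
  by rewrite Hpd Ho.
apply: accL_G.
case: (leqP (2 ^ p) (n - 2 ^ (p + d))) => H3.
  exact: (accL_G [:: p + d] (IH _ (ltnW Hd) H3 Hlt Ho')).
rewrite (R_low (leq_addr d p) H3).
have [i [Hi Ha]] := L_low (leqnn p) (odd_gt0 Ho') H3 Ho'.
apply: (accL_G_exit (q' := i + 2)) => //; try lia.
Qed.
End Acc3.


Section Main.
Variable p : nat.

Definition AK : nfa p.+2 (2 * p.+1) := @mkA p.+2 (trK p) fin0 (2 * p.+1) (fun _ => true).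
Definition AL : nfa p.+2 (2 * p.+1) := @mkA p.+2 (trL p) fin0 (2 * p.+1) (fun q => q != 0).

Lemma all_val (w : seq 'I_(2 * p.+1)) : all (fun x => x < 2 * p.+1) (map val w).
Proof. by apply/allP => x /mapP [y _ ->]; exact: ltn_ord. Qed.

Lemma K_PK (w : seq 'I_(2 * p.+1)) : nfa_lang AK w -> PK p (2 * p.+1) (map val w).
Proof.
rewrite /AK lang_mkA => /existsP [q /andP [_ /accK_CK /CK_PK /andP [H1 H2]]].
by rewrite /PK H1 H2 all_val.
Qed.

Lemma L_PL (w : seq 'I_(2 * p.+1)) : nfa_lang AL w -> PL p (2 * p.+1) (map val w).
Proof.
rewrite /AL lang_mkA => /existsP [q /andP [Hq0 Ha]].
have := CL_PL Hq0 (accL_CL (ltn_ord q) Ha).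
by rewrite /PL all_val andbT.
Qed.

Lemma KL_disj (w : seq 'I_(2 * p.+1)) : nfa_lang AK w -> nfa_lang AL w -> False.
Proof.
move=> /K_PK /and3P [_ H1 _] /L_PL /andP [H2 _].
move: H1 H2; rewrite /Ylast /Dprop => /orP [/eqP ->|H] // /and3P [_ H3 _].
by move: H; rewrite H3.
Qed.

Lemma lt0k : 0 < 2 * p.+1. Proof. by rewrite muln_gt0. Qed.
Definition d0 : 'I_(2 * p.+1) := Ordinal lt0k.
Definition enc (s : seq nat) : seq 'I_(2 * p.+1) := map (insubd d0) s.

Lemma enc_val s : all (fun x => x < 2 * p.+1) s -> map val (enc s) = s.
Proof.
elim: s => [|x s IH] //= /andP [Hx Hs]; rewrite IH // val_insubd Hx //.
Qed.

Lemma R_small e n : e <= p + p -> all (fun x => x < 2 * p.+1) (ruler e n).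
Proof.
move=> He; apply: sub_all (R_lt e n) => x /= Hx; move: Hx He; lia.
Qed.

Lemma accept_even n : n < 2 ^ (p + p) -> ~~ odd n -> nfa_lang AK (enc (ruler (p + p) n)).
Proof.
move=> Hn Ho; rewrite /AK lang_mkA enc_val ?R_small //.
have [q [Hq Ha]] := K_accept (leqnn p) Hn Ho.
have Hq' : q < p.+2 by lia.
by apply/existsP; exists (Ordinal Hq').
Qed.

Lemma accept_odd n : n < 2 ^ (p + p) -> odd n -> nfa_lang AL (enc (ruler (p + p) n)).
Proof.
move=> Hn Ho; rewrite /AL lang_mkA enc_val ?R_small //.
case: (ltnP n (2 ^ p)) => H.
  rewrite (R_low (leq_addr p p) H).
  have [i [Hi Ha]] := L_low (leqnn p) (odd_gt0 Ho) H Ho.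
  have Hi' : i + 2 < p.+2 by lia.
  by apply/existsP; exists (Ordinal Hi'); apply/andP; split; [rewrite /= addn2 | exact: Ha].
have Ha := L_top (leqnn p) H Hn Ho.
by apply/existsP; exists (@Ordinal p.+2 1 isT).
Qed.

Definition ws := [seq enc (ruler (p + p) n) | n <- iota 0 (2 ^ (p + p))].

Lemma size_ws : size ws = 2 ^ (p + p).
Proof. by rewrite size_map size_iota. Qed.

Lemma nth_ws i : i < 2 ^ (p + p) -> nth [::] ws i = enc (ruler (p + p) i).
Proof.
move=> Hi; rewrite (nth_map 0) ?size_iota // nth_iota //.
Qed.

Lemma accept_any n : n < 2 ^ (p + p) ->
  (if odd n then nfa_lang AL else nfa_lang AK) (enc (ruler (p + p) n)).
Proof.
move=> Hn; case: ifP => Ho; [exact: accept_odd | apply: accept_even => //; by rewrite Ho].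
Qed.

Lemma tower_ws : is_tower (nfa_lang AK) (nfa_lang AL) ws.
Proof.
have Hpos : 0 < 2 ^ (p + p) by rewrite expn_gt0.
split; first by rewrite size_ws.
split.
  by rewrite nth_ws // (accept_even Hpos).
move=> i; rewrite size_ws => Hi.
have Hi0 : i < 2 ^ (p + p) by apply: ltnW.
rewrite !nth_ws //; split.
- by apply: map_subseq; apply: R_sub.
- move=> HK; have A1 := accept_any Hi0; have A2 := accept_any Hi.
  rewrite /= in A2; case: (boolP (odd i)) A1 A2 => Ho A1 A2.
    by case: (KL_disj HK A1).
  exact: A2.
- move=> HL; have A1 := accept_any Hi0; have A2 := accept_any Hi.
  rewrite /= in A2; case: (boolP (odd i)) A1 A2 => Ho A1 A2.
    exact: A2.
  by case: (KL_disj A1 HL).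
Qed.
End Main.

From Stdlib Require Import Reals.
From Stdlib Require Import Lra.

Lemma INR_exp2 k : INR (expn 2 k) = (2 ^ k)%R.
Proof.
elim: k => [|k IH]; first by rewrite expn0.
rewrite expnS -multE mult_INR IH /=; ring.
Qed.

Theorem theorem10 :
  exists c : R, (0 < c)%R /\
    forall m : nat, 1 <= m ->
      exists (A B : nfa m.+1 (2 * m)),
        (exists ws : seq (seq 'I_(2 * m)),
            is_tower (nfa_lang A) (nfa_lang B) ws /\
            (c * 2 ^ (2 * m) <= INR (size ws))%R) /\
        ~ (exists w : nat -> seq 'I_(2 * m),
              is_infinite_tower (nfa_lang A) (nfa_lang B) w).
Proof.
exists (1/4)%R; split; first lra.
move=> m; case: m => [//|p] _.
exists (AK p), (AL p); split.
  exists (ws p); split; first exact: tower_ws.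
  rewrite size_ws INR_exp2.
  have -> : muln 2 p.+1 = addn (addn p p) 2.
    by rewrite mulnS mul2n -addnn addnC.
  rewrite pow_add /=; lra.
move=> [w [H0 Hs]].
have Hstep : forall i, subseq (w i) (w i.+1) by move=> i; case: (Hs i).
have HKL : forall i, nfa_lang (AK p) (w i) -> nfa_lang (AL p) (w i.+1) by move=> i; case: (Hs i).
have HLK : forall i, nfa_lang (AL p) (w i) -> nfa_lang (AK p) (w i.+1) by move=> i; case: (Hs i).
case/orP: H0 => H0.
  have Hpar : forall k, nfa_lang (AK p) (w k.*2) /\ nfa_lang (AL p) (w k.*2.+1).
    elim=> [|k [IH1 IH2]]; first by split => //; apply: HKL.
    have H2 : nfa_lang (AK p) (w k.+1.*2) by rewrite doubleS; apply: HLK.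
    by split => //; apply: HKL.
  apply: (@no_inf p (2 * p.+1) (fun i => map val (w i))).
  - by move=> i; apply: map_subseq; exact: Hstep.
  - by move=> k; apply: K_PK; case: (Hpar k).
  - by move=> k; apply: L_PL; case: (Hpar k).
have Hpar : forall k, nfa_lang (AK p) (w k.*2.+1) /\ nfa_lang (AL p) (w k.*2.+2).
  elim=> [|k [IH1 IH2]]; first by split; [apply: HLK | apply: HKL; apply: HLK].
  have H2 : nfa_lang (AK p) (w k.+1.*2.+1) by rewrite doubleS; apply: HLK.
  by split => //; apply: HKL.
apply: (@no_inf p (2 * p.+1) (fun i => map val (w i.+1))).
- by move=> i; apply: map_subseq; exact: Hstep.
- by move=> k; apply: K_PK; case: (Hpar k).
- by move=> k; apply: L_PL; case: (Hpar k).
Qed.
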